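(* Let $H_1,\dots,H_s$ be graphs with cores $C_1,\dots,C_s$, and suppose there is a homomorphism from $H_j$ to $H_{j+1}$ for every $j=1,\dots,s$ (indices modulo $s$). Then $C_1,\dots,C_s$ are all isomorphic to a common graph $C$, and $H_1,\dots,H_s$ all have the same $C$-covering number.
   Context: A homomorphism $F\to F'$ is a vertex map sending edges to edges. A subgraph $C$ of $H$ is a core of $H$ if there is a homomorphism $H\to C$ but none from $H$ to a proper subgraph of $C$. A copy of $C$ in $F$ is a (not necessarily induced) subgraph of $F$ isomorphic to $C$. For a graph $F$ and a $c$-vertex graph $C$, a $C$-coloring of $F$ is a map $f:V(F)\to\{1,\dots,c\}$ such that the vertices of every copy of $C$ in $F$ receive pairwise distinct colors; $F$ is $C$-colorable if it has one. If $C$ is the core of $H$, a $C$-covering of $H$ of size $r$ is a collection $C_1,\dots,C_r\subseteq V(H)$ such that every copy of $C$ in $H$ lies in the subgraph induced by some $C_i$, and each induced subgraph $H[C_i]$ is $C$-colorable. The $C$-covering number of $H$ is the minimum size of a $C$-covering of $H$. *)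

(* Defs.v *)
From mathcomp Require Import all_boot.
Set Implicit Arguments. Unset Strict Implicit. Unset Printing Implicit Defensive.

Record sgraph := SGraph {
  vert :> finType;
  adj : rel vert;
  adj_sym : symmetric adj;
  adj_irr : irreflexive adj }.

Definition hom (F F' : sgraph) (f : F -> F') : Prop :=
  forall x y, adj x y -> adj (f x) (f y).

Record subgraph (G : sgraph) := Subgraph {
  sv : {set G};
  se : rel G;
  se_sub : forall x y, se x y -> [&& adj x y, x \in sv & y \in sv];
  se_sym : symmetric se }.

Definition sub_le (G : sgraph) (D C : subgraph G) : Prop :=
  sv D \subset sv C /\ (forall x y, se D x y -> se C x y).

Definition sub_eq (G : sgraph) (D C : subgraph G) : Prop :=
  sv D = sv C /\ se D =2 se C.

Definition hom_into (G : sgraph) (D : subgraph G) (f : G -> G) : Prop :=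
  (forall x, f x \in sv D) /\ (forall x y, adj x y -> se D (f x) (f y)).

Definition is_core (H : sgraph) (C : subgraph H) : Prop :=
  (exists f, hom_into C f) /\
  ~ (exists D : subgraph H, [/\ sub_le D C, ~ sub_eq D C & exists f, hom_into D f]).

Definition iso_sub (C G : sgraph) (D : subgraph G) : Prop :=
  exists g : C -> G,
    [/\ injective g, sv D = [set g x | x : vert C] & forall x y, adj x y = se D (g x) (g y)].

Definition copy (C F : sgraph) (D : subgraph F) : Prop := iso_sub C D.

Definition C_coloring (C F : sgraph) (f : F -> 'I_#|{: vert C}|) : Prop :=
  forall D : subgraph F, copy C D -> {in sv D &, injective f}.

Definition C_colorable (C F : sgraph) : Prop := exists f : F -> 'I_#|{: vert C}|, C_coloring f.

Definition induced (G : sgraph) (S : {set G}) : sgraph.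
Proof.
refine (@SGraph {x : G | x \in S} (fun x y => adj (val x) (val y)) _ _).
- by move=> x y; rewrite adj_sym.
- by move=> x; rewrite adj_irr.
Defined.

Definition C_covering (C H : sgraph) (r : nat) : Prop :=
  exists cs : seq {set H},
    [/\ size cs = r,
        (forall D : subgraph H, copy C D -> exists2 S, S \in cs & sv D \subset S)
      & (forall S, S \in cs -> C_colorable C (induced S))].

Definition C_covering_number (C H : sgraph) (r : nat) : Prop :=
  C_covering C H r /\ (forall r', C_covering C H r' -> r <= r').

(* Main.v *)
From Stdlib Require Import Classical.
Require Import Defs.
From mathcomp Require Import all_boot.

Set Implicit Arguments. Unset Strict Implicit. Unset Printing Implicit Defensive.

Definition subg (G : sgraph) (C : subgraph G) : sgraph.
Proof.
refine (@SGraph {x : G | x \in sv C} (fun x y => se C (val x) (val y)) _ _).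
- by move=> x y; rewrite se_sym.
- move=> x; apply/negP => /se_sub /andP [] ; by rewrite adj_irr.
Defined.

Lemma core_inj (G : sgraph) (C : subgraph G) (phi : G -> G) :
  is_core C -> hom_into C phi ->
  {in sv C &, injective phi} /\ phi @: sv C = sv C /\
  (forall a b, a \in sv C -> b \in sv C -> se C (phi a) (phi b) -> se C a b).
Proof.
move=> [_ hc] [hin hed].
pose sD := phi @: sv C.
pose eD := fun x y : G => [exists a, exists b, [&& se C a b, phi a == x & phi b == y]].
have eDsub : forall x y, eD x y -> [&& adj x y, x \in sD & y \in sD].
  move=> x y /existsP [a /existsP [b /and3P [hab /eqP <- /eqP <-]]].
  have := se_sub hab => /and3P [hadj ha hb].
  have := se_sub (hed _ _ hadj) => /and3P [h1 _ _].
  by rewrite h1 /sD !imset_f.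
have eDsym : symmetric eD.
  move=> x y; apply/existsP/existsP.
  - move=> [a /existsP [b /and3P [hab h1 h2]]]; exists b; apply/existsP; exists a.
    by rewrite se_sym hab h1 h2.
  - move=> [a /existsP [b /and3P [hab h1 h2]]]; exists b; apply/existsP; exists a.
    by rewrite se_sym hab h1 h2.
pose D := Subgraph eDsub eDsym.
have hle : sub_le D C.
  split.
  - apply/subsetP => x /imsetP [a ha ->]; exact: hin.
  - move=> x y /existsP [a /existsP [b /and3P [hab /eqP <- /eqP <-]]].
    have := se_sub hab => /and3P [hadj _ _]; exact: hed.
have hhom : hom_into D (phi \o phi).
  split.
  - move=> x; rewrite /= /sD; apply: imset_f; exact: hin.
  - move=> x y hxy; apply/existsP; exists (phi x); apply/existsP; exists (phi y).
    by rewrite hed //= !eqxx.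
have heq : sub_eq D C.
  apply: NNPP => hne; apply: hc; exists D; split => //; by exists (phi \o phi).
case: heq => hsv hse.
have hinj : {in sv C &, injective phi}.
  apply/imset_injP; by rewrite -/sD [sD]hsv.
split => //; split => //.
move=> a b ha hb h.
have : eD (phi a) (phi b) by move: h; rewrite -hse.
move=> /existsP [a' /existsP [b' /and3P [hab /eqP e1 /eqP e2]]].
have := se_sub hab => /and3P [_ ha' hb'].
by rewrite -(hinj _ _ ha' ha e1) -(hinj _ _ hb' hb e2).
Qed.
Lemma core_iso (G G' : sgraph) (C : subgraph G) (C' : subgraph G')
  (f : G -> G') (g : G' -> G) :
  is_core C -> is_core C' -> hom f -> hom g -> iso_sub (subg C) C'.
Proof.
move=> hc hc' hf hg.
have [[p [pin ped]] _] := hc.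
have [[p' [pin' ped']] _] := hc'.
have hphi : hom_into C (p \o g \o p' \o f).
  split; first by move=> x; exact: pin.
  move=> x y hxy; apply: ped; apply: hg.
  by have /and3P [] := se_sub (ped' _ _ (hf _ _ hxy)).
have hpsi : hom_into C' (p' \o f \o p \o g).
  split; first by move=> x; exact: pin'.
  move=> x y hxy; apply: ped'; apply: hf.
  by have /and3P [] := se_sub (ped _ _ (hg _ _ hxy)).
have [iphi [_ ephi]] := core_inj hc hphi.
have [ipsi _] := core_inj hc' hpsi.
pose m := fun x : subg C => p' (f (val x)).
have minj : injective m.
  move=> x y hm; apply: val_inj; apply: iphi; try exact: valP.
  by rewrite /= /m in hm *; rewrite hm.
exists m; split => //.
- apply/eqP; rewrite eq_sym eqEcard; apply/andP; split.
    apply/subsetP => y; move=> /imsetP [x _ ->]; exact: pin'.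
  rewrite card_imset // card_sig.
  have hpg : {in sv C' &, injective (p \o g)}.
    move=> x y hx hy e; apply: ipsi => //=; by rewrite -!/((p \o g) _) e.
  rewrite -(card_in_imset hpg).
  have -> : #|[pred x | x \in sv C]| = #|sv C| by apply: eq_card.
  apply: subset_leq_card; apply/subsetP => y /imsetP [x _ ->]; exact: pin.
- move=> x y /=; apply/idP/idP.
  + move=> h; apply: ped'; apply: hf; by have /and3P [] := se_sub h.
  + move=> h; apply: ephi; try exact: valP.
    apply: ped; apply: hg; by have /and3P [] := se_sub h.
Qed.
Definition goodT (C0 G : sgraph) := forall k : C0 -> G, hom k -> injective k.

Lemma inj_hom (C0 G : sgraph) (C : subgraph G) :
  is_core C -> iso_sub C0 C -> goodT C0 G.
Proof.
move=> hc [h [hinj hsv hadj]] k hk x y kxy.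
have [[p [pin ped]] _] := hc.
pose hinv := fun z : G => odflt x [pick c | h c == z].
have hinvP : forall z, z \in sv C -> h (hinv z) = z.
  move=> z; rewrite hsv => /imsetP [c _ ->].
  rewrite /hinv; case: pickP => [c' /eqP //|/(_ c)]; by rewrite eqxx.
pose w := p \o k \o hinv \o p.
have hw : hom_into C w.
  split; first by move=> z; exact: pin.
  move=> z z' hzz'; apply: (ped); apply: (hk).
  have := ped _ _ hzz'.
  by rewrite -{1}(hinvP _ (pin z)) -{1}(hinvP _ (pin z')) -hadj.
have [iw _] := core_inj hc hw.
pose S1 := (p \o k) @: [set: C0].
have hS1 : #|S1| == #|[set: C0]|.
  rewrite eqn_leq leq_imset_card /= cardsT.
  have -> : #|C0| = #|sv C| by rewrite hsv card_imset.
  rewrite -(card_in_imset iw); apply: subset_leq_card.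
  apply/subsetP => z /imsetP [z' _ ->]; apply: imset_f; by rewrite inE.
have := imset_injP hS1.
move=> /(_ x y); rewrite !inE => H; apply: H => //=; by rewrite kxy.
Qed.
Lemma image_copy (C0 G : sgraph) (k : C0 -> G) :
  hom k -> injective k -> exists D : subgraph G, copy C0 D /\ sv D = [set k x | x : C0].
Proof.
move=> hk ik.
pose eD := fun x y : G => [exists a, exists b, [&& adj a b, k a == x & k b == y]].
have eDsub : forall x y, eD x y -> [&& adj x y, x \in [set k x | x : C0] & y \in [set k x | x : C0]].
  move=> x y /existsP [a /existsP [b /and3P [hab /eqP <- /eqP <-]]].
  by rewrite hk // !imset_f.
have eDsym : symmetric eD.
  move=> x y; apply/existsP/existsP.
  - move=> [a /existsP [b /and3P [hab h1 h2]]]; exists b; apply/existsP; exists a.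
    by rewrite adj_sym hab h1 h2.
  - move=> [a /existsP [b /and3P [hab h1 h2]]]; exists b; apply/existsP; exists a.
    by rewrite adj_sym hab h1 h2.
exists (Subgraph eDsub eDsym); split => //.
exists k; split => // a b /=; apply/idP/existsP.
- move=> hab; exists a; apply/existsP; exists b; by rewrite hab !eqxx.
- move=> [a' /existsP [b' /and3P [hab /eqP /ik e1 /eqP /ik e2]]].
  by rewrite -e1 -e2.
Qed.

Lemma copy_image (C0 G1 G2 : sgraph) (e : G1 -> G2) :
  hom e -> goodT C0 G2 -> forall D : subgraph G1, copy C0 D ->
  {in sv D &, injective e} /\ exists D' : subgraph G2, copy C0 D' /\ sv D' = e @: sv D.
Proof.
move=> he hgood D [g [ginj gsv gadj]].
have ghom : hom g.
  move=> a b hab; rewrite gadj in hab; by have /and3P [] := se_sub hab.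
have khom : hom (e \o g) by move=> a b hab; apply: he; apply: ghom.
have kinj := hgood _ khom.
split.
- move=> x y; rewrite gsv => /imsetP [a _ ->] /imsetP [b _ ->] hab.
  by rewrite (kinj a b hab).
- have [D' [hD' hsv]] := image_copy khom kinj.
  exists D'; split => //; by rewrite hsv gsv -imset_comp.
Qed.
Lemma good_comp (C0 G G' : sgraph) (t : G -> G') :
  hom t -> goodT C0 G' -> goodT C0 G.
Proof.
move=> ht hg k hk x y kxy; apply: (hg (t \o k)) => /=; last by rewrite kxy.
by move=> a b hab; apply: ht; apply: hk.
Qed.

Definition pushv (G1 G2 : sgraph) (e : G1 -> G2) (S : {set G2})
  (x : induced (e @^-1: S)) : induced S.
Proof. refine (exist _ (e (val x)) _). have := valP x; by rewrite inE. Defined.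

Lemma pushv_hom (G1 G2 : sgraph) (e : G1 -> G2) (S : {set G2}) :
  hom e -> hom (@pushv G1 G2 e S).
Proof. move=> he x y /= hxy; exact: he. Qed.

Lemma val_hom (G : sgraph) (S : {set G}) : hom (fun x : induced S => val x).
Proof. by move=> x y. Qed.

Lemma cov_pull (C0 G1 G2 : sgraph) (e : G1 -> G2) (r : nat) :
  hom e -> goodT C0 G2 -> C_covering C0 G2 r -> C_covering C0 G1 r.
Proof.
move=> he hg [cs [hsz hcov hcol]].
exists (map (fun S : {set G2} => e @^-1: S) cs); split.
- by rewrite size_map.
- move=> D hD; have [_ [D' [hD' hsv]]] := copy_image he hg hD.
  have [S hS hsub] := hcov D' hD'.
  exists (e @^-1: S); first exact: map_f.
  apply/subsetP => x hx; rewrite inE; apply: (subsetP hsub); rewrite hsv.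
  exact: imset_f.
- move=> T /mapP [S hS ->].
  have [col hcolS] := hcol S hS.
  have hgS : goodT C0 (induced S) := good_comp (@val_hom G2 S) hg.
  exists (fun x => col (pushv x)) => E hE.
  have [iE [D'' [hD'' hsv]]] := copy_image (@pushv_hom _ _ e S he) hgS hE.
  move=> x y hx hy hc.
  apply: iE => //; apply: (hcolS _ hD'') => //; rewrite hsv; exact: imset_f.
Qed.
Lemma cov_exists (C0 G : sgraph) : exists r, C_covering C0 G r.
Proof.
pose cs := enum [set S : {set G} | #|S| == #|C0|].
exists (size cs), cs; split => //.
- move=> D [g [ginj gsv _]]; exists (sv D) => //.
  rewrite mem_enum inE gsv card_imset //.
- move=> S; rewrite mem_enum inE => /eqP hS.
  have E : #|induced S| = #|{: vert C0}|.
    by rewrite card_sig -hS; apply: eq_card.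
  exists (fun x => cast_ord E (enum_rank x)) => D _ x y _ _ h.
  exact: enum_rank_inj (cast_ord_inj h).
Qed.
Lemma min_exists (P : nat -> Prop) : (exists n, P n) ->
  exists n, P n /\ forall m, P m -> n <= m.
Proof.
move=> [n Pn]; elim: n {-2}n (leqnn n) Pn => [|N IH] n hn Pn.
  exists n; split => // m _; by rewrite leqn0 in hn; rewrite (eqP hn).
case: (classic (exists m, m < n /\ P m)) => [[m [hm Pm]]|hno].
  apply: (IH m) => //; exact: leq_trans hm hn.
exists n; split => // m Pm; rewrite leqNgt; apply/negP => hm; apply: hno.
by exists m.
Qed.

Lemma iter_ordS s (i : 'I_s) k : val (iter k (@ordS s) i) = (i + k) %% s.
Proof.
elim: k => [|k IH] /=; first by rewrite addn0 modn_small.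
by rewrite IH -addn1 modnDml addn1 addnS.
Qed.

Lemma reach_all (s : nat) (H : 'I_s -> sgraph)
  (hhom : forall j : 'I_s, exists f : H j -> H (ordS j), hom f) :
  forall i j : 'I_s, exists f : H i -> H j, hom f.
Proof.
have step : forall k i, exists f : H i -> H (iter k (@ordS s) i), hom f.
  elim => [|k IH] i /=; first by exists id.
  have [f hf] := IH i; have [g hg] := hhom (iter k (@ordS s) i).
  exists (g \o f) => x y hxy /=; exact: hg (hf _ _ hxy).
move=> i j.
have -> : j = iter (j + (s - i)) (@ordS s) i.
  apply: val_inj; rewrite iter_ordS addnCA subnKC; last exact: ltnW (ltn_ord i).
  by rewrite modnDr modn_small.
exact: step.
Qed.

Definition g0 : sgraph :=
  @SGraph unit (fun _ _ => false) (fun _ _ => erefl) (fun _ => erefl).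

Unset Implicit Arguments.
Theorem lemma14 (s : nat) (H : 'I_s -> sgraph)
  (Cs : forall j : 'I_s, subgraph (H j))
  (hcore : forall j : 'I_s, is_core (Cs j))
  (hhom : forall j : 'I_s, exists f : H j -> H (ordS j), hom f) :
  exists C : sgraph,
    (forall j : 'I_s, iso_sub C (Cs j)) /\
    (exists r : nat, forall j : 'I_s, C_covering_number C (H j) r).
Proof.
have reach := reach_all hhom.
case: s H Cs hcore hhom reach => [|s'] H Cs hcore hhom reach.
  by exists g0; split; [case | exists 0; case].
pose j0 : 'I_s'.+1 := ord0.
exists (subg (Cs j0)).
have iso : forall j, iso_sub (subg (Cs j0)) (Cs j).
  move=> j; have [f hf] := reach j0 j; have [g hg] := reach j j0.
  exact: core_iso (hcore j0) (hcore j) hf hg.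
have good : forall j, goodT (subg (Cs j0)) (H j).
  move=> j; exact: inj_hom (hcore j) (iso j).
split => //.
have [r [hr hmin]] := min_exists (cov_exists (subg (Cs j0)) (H j0)).
have equiv : forall j n, C_covering (subg (Cs j0)) (H j) n <-> C_covering (subg (Cs j0)) (H j0) n.
  move=> j n; have [f hf] := reach j0 j; have [g hg] := reach j j0.
  split; [exact: cov_pull hf (good j) | exact: cov_pull hg (good j0)].
exists r => j; split; first by apply/equiv.
by move=> r' /equiv; apply: hmin.
Qed.
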